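(* Let $a\in\mathbb{R}^n$ with $a_1=0$. For each integer $j\ge0$ and each $k\in\{0,1,\dots,\log n\}$ define $b_{j,k}:=a_{1+2^k j}$, with the convention $b_{j,k}=0$ if $1+2^kj>n$. Then $$\max_{j\in[n]}a_j^2\le(\log n)\sum_{k=0}^{(\log n)-1}\sum_{j=1}^n(b_{j,k}-b_{j-1,k})^2.$$
   Context: Here $\log$ denotes the base-2 logarithm and $n$ is a power of $2$, so that $\log n$ is an integer. *)

(* Defs.v *)
From mathcomp Require Import all_boot all_order all_algebra.
Set Implicit Arguments. Unset Strict Implicit. Unset Printing Implicit Defensive.
Import Order.TTheory GRing.Theory Num.Theory.
Local Open Scope ring_scope.

(* Vectors a in R^n are represented 1-indexed as a : nat -> R; only the
   values a 1, ..., a n matter.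
   b_{j,k} := a_{1 + 2^k j} if 1 + 2^k j <= n, and 0 otherwise. *)
Definition bjk (R : numDomainType) (n : nat) (a : nat -> R) (j k : nat) : R :=
  if (1 + 2 ^ k * j <= n)%N then a (1 + 2 ^ k * j)%N else 0.

(* Main.v *)
Require Import Defs.
From mathcomp Require Import all_boot all_order all_algebra.
From mathcomp Require Import zify ring lra.
Import Order.TTheory GRing.Theory Num.Theory.
Local Open Scope ring_scope.

Lemma sum_ge_term (R : realFieldType) (F : nat -> R) lo hi q :
  (forall j, 0 <= F j) -> (lo <= q < hi)%N -> F q <= \sum_(lo <= j < hi) F j.
Proof.
move=> F0 hq; rewrite (bigD1_seq q) /= ?mem_index_iota ?iota_uniq //.
by rewrite lerDl sumr_ge0.
Qed.

Lemma arith (R : realFieldType) (i x d S D : R) :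
  0 <= i -> 0 <= S -> 0 <= D -> x ^+ 2 <= i * S -> d ^+ 2 <= D ->
  (x + d) ^+ 2 <= (i + 1) * (D + S).
Proof.
move=> i0 S0 D0 hx hd.
have [iz|ip] := eqVneq i 0; first (subst i).
  have x0 : x = 0.
    by apply/eqP; rewrite -sqrf_eq0 eq_le sqr_ge0 andbT; move: hx; rewrite mul0r.
  by rewrite x0 !add0r mul1r; apply: (le_trans hd); rewrite lerDl.
have ipos : 0 < i by rewrite lt_def ip i0.
rewrite -(ler_pM2l ipos).
have h1 : 0 <= (i + 1) * (i * S - x ^+ 2).
  by apply: mulr_ge0; [lra | rewrite subr_ge0].
have h2 : 0 <= i * (i + 1) * (D - d ^+ 2).
  by apply: mulr_ge0; [apply: mulr_ge0; lra | rewrite subr_ge0].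
have h3 : 0 <= (x - i * d) ^+ 2 by apply: sqr_ge0.
nra.
Qed.

Section Main.
Variables (R : realFieldType) (m : nat) (a : nat -> R).
Hypothesis a1 : a 1%N = 0.
Let n := (2 ^ m)%N.
Let D k := \sum_(1 <= j < n.+1) (bjk n a j k - bjk n a j.-1 k) ^+ 2.
Let S k := \sum_(k <= k' < m) D k'.

Lemma D_ge0 k : 0 <= D k.
Proof. by apply: sumr_ge0 => j _; apply: sqr_ge0. Qed.

Lemma S_ge0 k : 0 <= S k.
Proof. by apply: sumr_ge0 => j _; apply: D_ge0. Qed.

Lemma mainL i : (i <= m)%N -> forall t, (t < n)%N -> (2 ^ (m - i) %| t)%N ->
  a (1 + t)%N ^+ 2 <= i%:R * S (m - i).
Proof.
elim: i => [|i IH] im t tn hd.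
  rewrite subn0 in hd.
  have -> : t = 0%N.
    case: (posnP t) => // tp; have := dvdn_leq tp hd; rewrite /n in tn; lia.
  by rewrite addn0 a1 expr0n /= mul0r.
set k := (m - i.+1)%N.
have mik : (m - i = k.+1)%N by rewrite /k; lia.
have SkE : S k = D k + S k.+1.
  rewrite /S big_ltn //; rewrite /k; lia.
have IH' := IH (ltnW im).
rewrite mik in IH'.
have kp : (0 < 2 ^ k)%N by rewrite expn_gt0.
have tE : t = (t %/ 2 ^ k * 2 ^ k)%N by rewrite divnK.
set q := (t %/ 2 ^ k)%N in tE.
case: (boolP (2 ^ k.+1 %| t)%N) => h2.
  apply: (le_trans (IH' t tn h2)).
  rewrite SkE.
  apply: (le_trans (y := i%:R * (D k + S k.+1))).
    by rewrite ler_wpM2l // lerDr D_ge0.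
  by rewrite -natr1 mulrDl mul1r lerDl addr_ge0 ?D_ge0 ?S_ge0.
have qodd : odd q.
  apply: contraNT h2; rewrite -dvdn2 => hq.
  by rewrite tE expnSr [(2 ^ k * 2)%N]mulnC dvdn_pmul2r.
have q0 : (0 < q)%N by case: q qodd tE.
set s := (q.-1 * 2 ^ k)%N.
have hs : (2 ^ k.+1 %| s)%N.
  rewrite /s expnSr [(2 ^ k * 2)%N]mulnC dvdn_pmul2r // dvdn2.
  by move: qodd; rewrite -[q in odd q](prednK q0) oddS; case: odd.
have stn : (s < n)%N.
  apply: leq_ltn_trans tn; rewrite tE /s leq_mul2r; lia.
have hx := IH' s stn hs.
have hterm := @sum_ge_term R (fun j => (bjk n a j k - bjk n a j.-1 k) ^+ 2)
  1 n.+1 q (fun j => sqr_ge0 _).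
have qn : (q <= n)%N.
  apply: leq_trans (ltnW tn); rewrite tE; apply: leq_pmulr => //.
have := hterm ltac:(apply/andP; split => //).
rewrite /bjk.
have e1 : (1 + 2 ^ k * q = 1 + t)%N by rewrite tE mulnC.
have e2 : (1 + 2 ^ k * q.-1 = 1 + s)%N by rewrite /s mulnC.
rewrite e1 e2 ifT; last by rewrite /n in tn *; lia.
rewrite ifT; last by rewrite /n in stn *; lia.
move=> hd2.
have -> : a (1 + t)%N = a (1 + s)%N + (a (1 + t)%N - a (1 + s)%N) by rewrite addrC subrK.
rewrite SkE -natr1.
by apply: arith => //; [apply: S_ge0 | apply: D_ge0].
Qed.

End Main.

(* n = 2 ^ m, so log n = m. *)
Theorem claimC3 (R : realFieldType) (m : nat) (a : nat -> R) :
  a 1%N = 0 ->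
  \big[Num.max/0]_(1 <= j < (2 ^ m).+1) (a j ^+ 2)
    <= m%:R * \sum_(0 <= k < m) \sum_(1 <= j < (2 ^ m).+1)
                 (bjk (2 ^ m) a j k - bjk (2 ^ m) a j.-1 k) ^+ 2.
Proof.
move=> a1.
rewrite big_seq_cond; apply: bigmax_le.
  by apply: mulr_ge0 => //; apply: sumr_ge0 => k _; apply: sumr_ge0 => j _; apply: sqr_ge0.
move=> j /andP[hj _]; rewrite mem_index_iota in hj.
have := @mainL R m a a1 m (leqnn m) j.-1 ltac:(lia).
rewrite subnn expn0 dvd1n => /(_ isT).
by have -> : (1 + j.-1 = j)%N by lia.
Qed.
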